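(* Let $\alpha\le1$ and $\theta=(\frac12,\alpha,\alpha)$. Let $\hat\mu\in\mathbb R_+^{|\mathcal N|\times|\mathcal I|}$ be an estimate of $(\mu_{ij})_{i\in\mathcal N,j\in\mathcal I}$, let $\hat P\in\arg\max_{P\in\mathcal P}W_\theta(\hat u(P))$ and $P^*\in\arg\max_{P\in\mathcal P}W_\theta(u(P))$, and let $$B(\hat\mu)=\max\Big(\max_{i\in[n]}\psi'(u_i(\hat P),\alpha),\ \max_{i\in[n]}\psi'(\hat u_i(P^* ),\alpha)\Big)$$ (with $B(\hat\mu)=+\infty$ if some argument is $0$ and $\alpha<1$). Then $$W_\theta(u(P^* ))-W_\theta(u(\hat P))\le 4B(\hat\mu)\sqrt{n\|v\|_2^2}\sqrt{\sum_{(i,j)\in\mathcal N\times\mathcal I}(\hat\mu_{ij}-\mu_{ij})^2}.$$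
   Context: Setup: users $\mathcal N=\{1,\dots,|\mathcal N|\}$, items $\mathcal I=\{|\mathcal N|+1,\dots,n\}$, $n=|\mathcal N|+|\mathcal I|$; exposure weights $v\in\mathbb R^{|\mathcal I|}$ with $v_1\ge\dots\ge v_{|\mathcal I|}\ge0$; values $\mu_{ij}\ge0$ for $i,j\in[n]$ ($\mu_{ij}$ for $i\in\mathcal N,j\in\mathcal I$ is the value of item $j$ to user $i$; $\mu_{ji}$ is the known value of user $i$ to item $j$, e.g. $\mu_{ji}=1$ in the exposure case). A ranking tensor is $P=(P_{ijk})_{i,j\in[n],k\in[|\mathcal I|]}$ with $P_{ijk}=0$ unless $i\in\mathcal N,j\in\mathcal I$, and each $P_i=(P_{ijk})_{j\in\mathcal I,k}$ doubly stochastic; $\mathcal P$ is the set of ranking tensors; $P_{ij}v=\sum_kP_{ijk}v_k$; true utilities $u_i(P)=\sum_{j=1}^n\mu_{ij}(P_{ij}+P_{ji})v$. Estimated utilities: $\hat u_i(P)=\sum_{j\in\mathcal I}\hat\mu_{ij}P_{ij}v$ for $i\in\mathcal N$ and $\hat u_j(P)=u_j(P)$ for $j\in\mathcal I$. Welfare: $\psi(x,\alpha)=x^\alpha$ ($\alpha>0$), $\log x$ ($\alpha=0$), $-x^\alpha$ ($\alpha<0$), with $\psi(0,\alpha)=-\infty$ for $\alpha\le0$; $\psi'(x,\alpha)$ is its derivative in $x$; $W_\theta(u)=(1-\lambda)\sum_{i\in\mathcal N}\psi(u_i,\alpha_1)+\lambda\sum_{j\in\mathcal I}\psi(u_j,\alpha_2)$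 for $\theta=(\lambda,\alpha_1,\alpha_2)$. *)

(* Defs.v *)
From HB Require Import structures.
From mathcomp Require Import all_boot all_order all_algebra.
From mathcomp Require Import all_classical all_reals.
From mathcomp Require Import ereal exp.
Set Implicit Arguments. Unset Strict Implicit. Unset Printing Implicit Defensive.
Import Order.TTheory GRing.Theory Num.Theory.
Local Open Scope ring_scope.

(* Users are 'I_nU, items are 'I_nI (so n = nU + nI).
   A ranking tensor is represented by P : 'I_nU -> 'I_nI -> 'I_nI -> R,
   P i j k = P_{ijk} for user i, item j, rank k (all other entries are 0). *)
Section Model.
Variable R : realType.
Variables nU nI : nat.

Definition ranking_tensor (P : 'I_nU -> 'I_nI -> 'I_nI -> R) : Prop :=
  forall i : 'I_nU,
    (forall j k, 0 <= P i j k) /\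
    (forall j, \sum_(k < nI) P i j k = 1) /\
    (forall k, \sum_(j < nI) P i j k = 1).

Definition Pv (P : 'I_nU -> 'I_nI -> 'I_nI -> R) (v : 'I_nI -> R) i j : R :=
  \sum_(k < nI) P i j k * v k.

Definition u_user (muU : 'I_nU -> 'I_nI -> R) v P (i : 'I_nU) : R :=
  \sum_(j < nI) muU i j * Pv P v i j.

(* utility of item j: sum_i mu_ji P_ij v  (mu_ji = value of user i to item j) *)
Definition u_item (muI : 'I_nI -> 'I_nU -> R) v P (j : 'I_nI) : R :=
  \sum_(i < nU) muI j i * Pv P v i j.

Definition psi (alpha x : R) : \bar R :=
  if 0 < alpha then (x `^ alpha)%:E
  else if x == 0 then -oo%E
  else if alpha == 0 then (ln x)%:E
  else (- x `^ alpha)%:E.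

Definition psi' (alpha x : R) : \bar R :=
  if (x == 0) && (alpha < 1) then +oo%E
  else if alpha == 0 then (x^-1)%:E
  else (`|alpha| * x `^ (alpha - 1))%:E.

(* W_theta for theta = (lambda, a1, a2) *)
Definition W (lambda a1 a2 : R) (uU : 'I_nU -> R) (uI : 'I_nI -> R) : \bar R :=
  ((1 - lambda)%:E * \sum_(i < nU) psi a1 (uU i) +
   lambda%:E * \sum_(j < nI) psi a2 (uI j))%E.

Definition emax (I : finType) (f : I -> \bar R) : \bar R :=
  \big[Order.max/-oo%E]_(i : I) f i.

End Model.

(* Main.v *)
Require Import Defs.
From HB Require Import structures.
From mathcomp Require Import all_boot all_order all_algebra.
From mathcomp Require Import all_classical all_reals.
From mathcomp Require Import ereal exp convex.
From mathcomp Require Import lra ring.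
Import Order.TTheory GRing.Theory Num.Theory.
Local Open Scope ring_scope.
Set Implicit Arguments. Unset Strict Implicit.

Section Conc.
Variable R : realType.
Implicit Types (a x y alpha : R).

Definition fr alpha x : R :=
  if 0 < alpha then x `^ alpha else if alpha == 0 then ln x else - x `^ alpha.
Definition gr alpha x : R :=
  if alpha == 0 then x^-1 else `|alpha| * x `^ (alpha - 1).

Lemma amgm alpha a : 0 < alpha -> alpha <= 1 -> 0 < a ->
  a `^ alpha <= alpha * a + (1 - alpha).
Proof.
move=> a0 a1 apos.
have h0 : 0 <= alpha by exact: ltW.
pose t : {i01 R} := Itv01 h0 a1.
have := @concave_ln R t a 1 apos ltr01.
rewrite !convRE /= ln1 mulr0 addr0 mulr1.
move=> H; rewrite /powR gt_eqF //.
have hp : 0 < alpha * a + (1 - alpha).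
  by apply: ltr_pwDl; [rewrite mulr_gt0|rewrite subr_ge0].
rewrite -[X in _ <= X](lnK hp) ler_expR mulrC.
by rewrite mulrC; exact: H.
Qed.

Lemma xpow_mul alpha x : 0 < x -> x `^ (alpha - 1) * x = x `^ alpha.
Proof.
move=> x0; rewrite -{2}(powRr1 (ltW x0)) -powRD; first by rewrite subrK.
by apply/implyP => _; rewrite gt_eqF.
Qed.

Lemma conc alpha x y : alpha <= 1 -> 0 < x -> 0 < y ->
  fr alpha y <= fr alpha x + gr alpha x * (y - x).
Proof.
move=> a1 x0 y0; rewrite /fr /gr.
have ya : y = x * (y / x) by rewrite mulrCA divff ?gt_eqF // mulr1.
have q0 : 0 < y / x by rewrite divr_gt0.
have [ha|ha|ha] := ltgtP 0 alpha.
- idtac.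
  rewrite gtr0_norm // ya (powRM _ (ltW x0) (ltW q0)).
  have e : x `^ (alpha - 1) * (x * (y / x) - x) = x `^ alpha * (y/x - 1).
    rewrite -(xpow_mul alpha x0) -mulrA; congr (_ * _); by rewrite mulrBr mulr1.
  rewrite -mulrA e mulrCA -{2}(mulr1 (x `^ alpha)) -mulrDr.
  apply: ler_wpM2l; first exact: powR_ge0.
  have := amgm ha a1 q0; rewrite mulrBr mulr1; lra.
- rewrite ltr0_norm // ya (powRM _ (ltW x0) (ltW q0)).
  have e : x `^ (alpha - 1) * (x * (y / x) - x) = x `^ alpha * (y/x - 1).
    rewrite -(xpow_mul alpha x0) -mulrA; congr (_ * _); by rewrite mulrBr mulr1.
  rewrite -mulrA e.
  have hx : 0 < x `^ alpha by rewrite powR_gt0.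
  suff : 1 + alpha * (y / x - 1) <= (y / x) `^ alpha.
    move=> H; have := ler_wpM2l (ltW hx) H; rewrite mulrDr mulr1; nra.
  have h1 : ln (y/x) <= y / x - 1.
    by have := le_ln1Dx (x:=y/x - 1); rewrite (addrC 1) subrK; apply; lra.
  rewrite /powR gt_eqF //; apply: le_trans (expR_ge1Dx _).
  rewrite lerD2l; apply: ler_wnM2l; lra.
- idtac.
  have h1 : ln (y/x) <= y / x - 1.
    by have := le_ln1Dx (x:=y/x - 1); rewrite (addrC 1) subrK; apply; lra.
  rewrite ln_div ?posrE // in h1.
  have -> : x^-1 * (y - x) = y / x - 1 by rewrite mulrBr mulrC mulVf ?gt_eqF.
  lra.
Qed.

Local Open Scope ereal_scope.

Lemma psi_fin alpha x : (alpha <= 1)%R -> (0 <= x)%R -> (0 < x \/ alpha = 1)%R ->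
  psi alpha x = (fr alpha x)%:E.
Proof.
move=> a1 x0 h; rewrite /psi /fr; case: ifP => // ha.
case: h => [xp|a1']; last by rewrite a1' ltr01 in ha.
by rewrite gt_eqF //; case: ifP.
Qed.

Lemma psi'_fin alpha x : (alpha <= 1)%R -> (0 <= x)%R -> (0 < x \/ alpha = 1)%R ->
  psi' alpha x = (gr alpha x)%:E.
Proof.
move=> a1 x0 h; rewrite /psi' /gr.
case: h => [xp|->]; first by rewrite gt_eqF //=; case: ifP.
by rewrite ltxx andbF /=; case: ifP.
Qed.

Lemma gr_ge0 alpha x : (0 <= x)%R -> (0 <= gr alpha x)%R.
Proof.
move=> x0; rewrite /gr; case: ifP => _; first by rewrite invr_ge0.
by rewrite mulr_ge0 // powR_ge0.
Qed.

Lemma psi'_ge0 alpha x : (0 <= x)%R -> 0 <= psi' alpha x.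
Proof.
move=> x0; rewrite /psi'; case: ifP => _; first exact: leey.
have := gr_ge0 alpha x0; rewrite /gr; case: ifP => _ h; by rewrite lee_fin.
Qed.

Lemma psi'_inf alpha x : (alpha < 1)%R -> x = 0%R -> psi' alpha x = +oo.
Proof. by move=> a1 ->; rewrite /psi' eqxx a1. Qed.

Lemma psi_ltey alpha x : psi alpha x < +oo.
Proof.
rewrite /psi; case: ifP => _; first exact: ltey.
case: ifP => _; first exact: ltNye.
by case: ifP => _; exact: ltey.
Qed.

Lemma psi_conc alpha x y : (alpha <= 1)%R -> (0 <= x)%R -> (0 <= y)%R ->
  (0 < x \/ alpha = 1)%R ->
  psi alpha y <= (fr alpha x + gr alpha x * (y - x))%:E.
Proof.
move=> a1 x0 y0 [xp|ha]; last first.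
  rewrite ha /psi /fr /gr ltr01 oner_eq0 subrr powRr0 normr1 mulr1 mul1r.
  by rewrite !powRr1 // lee_fin addrC subrK.
have [yp|] := ltrP 0 y.
  by rewrite psi_fin //; [rewrite lee_fin; exact: conc | left].
move=> y0'; have -> : y = 0%R by apply/le_anti; rewrite y0' y0.
rewrite /psi /fr /gr; case: ifP => hp.
  rewrite powR0 ?gt_eqF // gtr0_norm // sub0r mulrN -mulrA xpow_mul //.
  rewrite lee_fin; have := powR_ge0 x alpha; nra.
by rewrite eqxx leNye.
Qed.
Local Close Scope ereal_scope.

Lemma cs2 (I : finType) (x y : I -> R) :
  (\sum_i x i * y i) ^+ 2 <= (\sum_i x i ^+ 2) * (\sum_i y i ^+ 2).
Proof.
set Sx := \sum_i x i ^+ 2; set Sy := \sum_i y i ^+ 2; set Sxy := \sum_i x i * y i.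
have Sx0 : 0 <= Sx by apply: sumr_ge0 => i _; exact: sqr_ge0.
have Sy0 : 0 <= Sy by apply: sumr_ge0 => i _; exact: sqr_ge0.
have [Sxp|] := ltrP 0 Sx; last first.
  move=> h; have Sxe : Sx = 0 by apply/le_anti; rewrite h Sx0.
  have xz : forall i, x i = 0.
    move=> i; apply/eqP; rewrite -sqrf_eq0; apply/eqP.
    by move/eqP: Sxe; rewrite psumr_eq0 => [/allP /(_ i (mem_index_enum i)) /implyP /(_ isT) /eqP|j _]; [|exact: sqr_ge0].
  rewrite /Sxy big1 ?expr0n ?Sxe ?mul0r // => i _; by rewrite xz mul0r.
pose t := Sxy / Sx.
have H : 0 <= \sum_i (y i - t * x i) ^+ 2 by apply: sumr_ge0 => i _; exact: sqr_ge0.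
have E : \sum_i (y i - t * x i) ^+ 2 = Sy - 2 * t * Sxy + t ^+ 2 * Sx.
  rewrite /Sy /Sxy /Sx.
  under eq_bigr => i _ do rewrite sqrrB.
  rewrite big_split /= sumrB mulr_sumr mulr_sumr; congr (_ - _ + _).
    by apply: eq_bigr => i _; rewrite mulr2n mulrDl !mul1r; ring.
  by apply: eq_bigr => i _; rewrite exprMn.
have E2 : Sy - 2 * t * Sxy + t ^+ 2 * Sx = Sy - Sxy ^+ 2 / Sx.
  rewrite /t; field; exact: lt0r_neq0.
rewrite E E2 subr_ge0 ler_pdivrMr // in H.
by rewrite mulrC.
Qed.

Lemma cs (I : finType) (x y : I -> R) :
  \sum_i x i * y i <= Num.sqrt (\sum_i x i ^+ 2) * Num.sqrt (\sum_i y i ^+ 2).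
Proof.
apply: le_trans (ler_norm _) _.
rewrite -sqrtr_sqr -sqrtrM; last by apply: sumr_ge0 => i _; exact: sqr_ge0.
rewrite ler_sqrt; first exact: cs2.
by apply: mulr_ge0; apply: sumr_ge0 => i _; exact: sqr_ge0.
Qed.

Lemma jensen (I : finType) (w z : I -> R) : (forall i, 0 <= w i) ->
  \sum_i w i = 1 -> (\sum_i w i * z i) ^+ 2 <= \sum_i w i * z i ^+ 2.
Proof.
move=> w0 w1.
have := cs2 (fun i => Num.sqrt (w i)) (fun i => Num.sqrt (w i) * z i).
have e1 : forall i, Num.sqrt (w i) * (Num.sqrt (w i) * z i) = w i * z i.
  by move=> i; rewrite mulrA -expr2 sqr_sqrtr.
under eq_bigr => i _ do rewrite e1.
under [X in _ * X]eq_bigr => i _ do rewrite exprMn sqr_sqrtr //.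
under [X in X * _]eq_bigr => i _ do rewrite sqr_sqrtr //.
by rewrite w1 mul1r.
Qed.
End Conc.

Section Model2.
Variable R : realType.
Variables nU nI : nat.
Implicit Types P : 'I_nU -> 'I_nI -> 'I_nI -> R.
Variable v : 'I_nI -> R.
Hypothesis v0 : forall k, 0 <= v k.

Lemma Pv_ge0 P i j : ranking_tensor P -> 0 <= Pv P v i j.
Proof.
move=> /(_ i) [P0 _]; apply: sumr_ge0 => k _; exact: mulr_ge0.
Qed.

Lemma u_user_ge0 (mu : 'I_nU -> 'I_nI -> R) P i : (forall i j, 0 <= mu i j) ->
  ranking_tensor P -> 0 <= u_user mu v P i.
Proof.
move=> m0 hP; apply: sumr_ge0 => j _; apply: mulr_ge0 => //; exact: Pv_ge0.
Qed.

Lemma u_item_ge0 (mu : 'I_nI -> 'I_nU -> R) P j : (forall j i, 0 <= mu j i) ->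
  ranking_tensor P -> 0 <= u_item mu v P j.
Proof.
move=> m0 hP; apply: sumr_ge0 => i _; apply: mulr_ge0 => //; exact: Pv_ge0.
Qed.

Lemma Pv_sq P i : ranking_tensor P ->
  \sum_j (Pv P v i j) ^+ 2 <= \sum_k v k ^+ 2.
Proof.
move=> hP; have [P0 [Pr Pc]] := hP i.
apply: (@le_trans _ _ (\sum_(j < nI) \sum_(k < nI) P i j k * v k ^+ 2)).

  apply: ler_sum => j _; apply: jensen => //.
rewrite exchange_big /=; rewrite le_eqVlt; apply/orP; left; apply/eqP/eq_bigr => k _.
by rewrite -mulr_suml Pc mul1r.
Qed.

Lemma dev (muU muhat : 'I_nU -> 'I_nI -> R) P : ranking_tensor P ->
  \sum_i `|u_user muU v P i - u_user muhat v P i|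
  <= Num.sqrt (nU%:R * \sum_k v k ^+ 2) *
     Num.sqrt (\sum_(i < nU) \sum_(j < nI) (muhat i j - muU i j) ^+ 2).
Proof.
move=> hP.
apply: (@le_trans _ _ (\sum_(i < nU) \sum_(j < nI) `|muhat i j - muU i j| * Pv P v i j)).
  apply: ler_sum => i _; rewrite /u_user -sumrB.
  apply: le_trans (ler_norm_sum _ _ _) _; apply: ler_sum => j _.
  by rewrite -mulrBl normrM (ger0_norm (Pv_ge0 _ _ hP)) distrC.
rewrite pair_bigA /=.
apply: le_trans (cs (fun p : 'I_nU * 'I_nI => `|muhat p.1 p.2 - muU p.1 p.2|)
                  (fun p => Pv P v p.1 p.2)) _.
rewrite mulrC; apply: ler_pM; [exact: sqrtr_ge0|exact: sqrtr_ge0| |].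
  rewrite -(pair_bigA _ (fun i j => Pv P v i j ^+ 2)) /=; rewrite ler_sqrt; last first.
    by rewrite mulr_ge0 // sumr_ge0 // => k _; exact: sqr_ge0.
  apply: (@le_trans _ _ (\sum_(i < nU) \sum_k v k ^+ 2)).
    by apply: ler_sum => i _; exact: Pv_sq.
  by rewrite sumr_const card_ord mulr_natl.
rewrite -(pair_bigA _ (fun i j => `|muhat i j - muU i j| ^+ 2)) /= ler_sqrt; last by rewrite sumr_ge0 // => i _; rewrite sumr_ge0 // => j _; exact: sqr_ge0.
by rewrite le_eqVlt; apply/orP; left; apply/eqP; apply: eq_bigr => i _; apply: eq_bigr => j _; rewrite real_normK // num_real.
Qed.
End Model2.

Section WLemmas.
Variable R : realType.
Variables nU nI : nat.
Variable alpha : R.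
Hypothesis a1 : alpha <= 1.

Lemma W_le (uU : 'I_nU -> R) (uI : 'I_nI -> R) rU rI :
  (forall i, (psi alpha (uU i) <= (rU i)%:E)%E) ->
  (forall j, (psi alpha (uI j) <= (rI j)%:E)%E) ->
  (W (1/2) alpha alpha uU uI <= ((1/2) * (\sum_i rU i + \sum_j rI j))%:E)%E.
Proof.
move=> hU hI; rewrite /W.
have h12 : 1 - 1/2 = 1/2 :> R by field.
rewrite h12 (EFinM (1/2)) EFinD muleDr //.
apply: leeD; apply: lee_wpmul2l; rewrite ?lee_fin ?divr_ge0 // -sumEFin; apply: lee_sum => *; by [apply: hU|apply: hI].
Qed.

Lemma W_fin (uU : 'I_nU -> R) (uI : 'I_nI -> R) :
  (forall i, 0 <= uU i) -> (forall j, 0 <= uI j) ->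
  (forall i, 0 < uU i \/ alpha = 1) -> (forall j, 0 < uI j \/ alpha = 1) ->
  W (1/2) alpha alpha uU uI = ((1/2) * (\sum_i fr alpha (uU i) + \sum_j fr alpha (uI j)))%:E.
Proof.
move=> hU hI gU gI; rewrite /W.
have h12 : 1 - 1/2 = 1/2 :> R by field.
under eq_bigr => i _ do rewrite psi_fin //.
under [X in (_ + _ * X)%E]eq_bigr => j _ do rewrite psi_fin //.
by rewrite !sumEFin h12 -!EFinM -EFinD mulrDr.
Qed.
End WLemmas.

Lemma good_of (R : realType) (alpha x : R) : 0 <= x -> alpha <= 1 ->
  psi' alpha x != +oo%E -> 0 < x \/ alpha = 1.
Proof.
move=> x0 a1 h; have [xp|] := ltrP 0 x; first by left.
move=> xle; have xz : x = 0 by apply/le_anti; rewrite xle x0.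
right; have [al|] := ltrP alpha 1; last by move=> h1; apply/le_anti; rewrite a1 h1.
by rewrite psi'_inf ?eqxx in h.
Qed.

Lemma emax_ge (R : realType) (I : finType) (f : I -> \bar R) i : (f i <= emax f)%E.
Proof. by rewrite /emax (bigD1 i) //= le_max lexx. Qed.

Lemma u_user0 (R : realType) nU nI (mu : 'I_nU -> 'I_nI -> R) P :
  u_user mu (fun=> 0) P = fun=> 0.
Proof.
apply/funext => i; rewrite /u_user big1 // => j _; rewrite /Pv big1 ?mulr0 // => k _.
by rewrite mulr0.
Qed.

Lemma u_item0 (R : realType) nU nI (mu : 'I_nI -> 'I_nU -> R) P :
  u_item mu (fun=> 0) P = fun=> 0.
Proof.
apply/funext => j; rewrite /u_item big1 // => i _; rewrite /Pv big1 ?mulr0 // => k _.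
by rewrite mulr0.
Qed.

Unset Implicit Arguments.
Set Strict Implicit.

Theorem mainTheorem11 (R : realType) (nU nI : nat)
  (v : 'I_nI -> R)
  (muU : 'I_nU -> 'I_nI -> R) (muI : 'I_nI -> 'I_nU -> R)
  (muhat : 'I_nU -> 'I_nI -> R)
  (alpha : R)
  (Phat Pstar : 'I_nU -> 'I_nI -> 'I_nI -> R) :
  (forall k k' : 'I_nI, (k <= k')%N -> v k' <= v k) ->
  (forall k, 0 <= v k) ->
  (forall i j, 0 <= muU i j) ->
  (forall j i, 0 <= muI j i) ->
  (forall i j, 0 <= muhat i j) ->
  alpha <= 1 ->
  ranking_tensor Phat ->
  (forall P, ranking_tensor P ->
     (W (1/2) alpha alpha (u_user muhat v P) (u_item muI v P)
      <= W (1/2) alpha alpha (u_user muhat v Phat) (u_item muI v Phat))%E) ->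
  ranking_tensor Pstar ->
  (forall P, ranking_tensor P ->
     (W (1/2) alpha alpha (u_user muU v P) (u_item muI v P)
      <= W (1/2) alpha alpha (u_user muU v Pstar) (u_item muI v Pstar))%E) ->
  let B : \bar R :=
    Order.max
      (Order.max (emax (fun i => psi' alpha (u_user muU v Phat i)))
                 (emax (fun j => psi' alpha (u_item muI v Phat j))))
      (Order.max (emax (fun i => psi' alpha (u_user muhat v Pstar i)))
                 (emax (fun j => psi' alpha (u_item muI v Pstar j)))) in
  (W (1/2) alpha alpha (u_user muU v Pstar) (u_item muI v Pstar)
   - W (1/2) alpha alpha (u_user muU v Phat) (u_item muI v Phat)
   <= B * (4 * Num.sqrt ((nU + nI)%:R * \sum_(k < nI) v k ^+ 2)
             * Num.sqrt (\sum_(i < nU) \sum_(j < nI) (muhat i j - muU i j) ^+ 2))%:E)%E.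
Proof.
move=> vmon v0 mU0 mI0 mh0 a1 hPh opth hPs opts.
cbv zeta; set B := Order.max _ _.
have H1 := opth _ hPs.
set S1 := \sum_(k < nI) v k ^+ 2.
set S2 := \sum_(i < nU) \sum_(j < nI) (muhat i j - muU i j) ^+ 2.
have S10 : 0 <= S1 by apply: sumr_ge0 => k _; exact: sqr_ge0.
have S20 : 0 <= S2 by apply: sumr_ge0 => i _; apply: sumr_ge0 => j _; exact: sqr_ge0.
set K := 4 * Num.sqrt ((nU + nI)%:R * S1) * Num.sqrt S2.
have K0 : 0 <= K by rewrite /K !mulr_ge0 // sqrtr_ge0.
have [Kp|Kle] := ltrP 0 K; last first.
  have -> : K = 0 by apply/le_anti; rewrite Kle K0.
  rewrite mule0 sube_le0.
  move: Kle; rewrite /K -mulrA pmulr_rle0 // => Kle.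
  have : Num.sqrt ((nU + nI)%:R * S1) * Num.sqrt S2 == 0.
    by rewrite eq_le Kle mulr_ge0 // sqrtr_ge0.
  rewrite mulf_eq0 => /orP [/eqP s1|/eqP s2].
  - have S1z : S1 = 0.
      move/eqP: s1; rewrite sqrtr_eq0 => h.
      have : (nU + nI)%:R * S1 == 0 by rewrite eq_le h mulr_ge0.
      rewrite mulf_eq0 pnatr_eq0 => /orP [|/eqP //].
      rewrite addn_eq0 => /andP [_ /eqP nI0].
      rewrite /S1 big1 // => -[k hk] _; exfalso; move: hk; by rewrite nI0.
    have vz : v = fun=> 0.
      apply/funext => k; apply/eqP; rewrite -sqrf_eq0; apply/eqP.
      move/eqP: S1z; rewrite psumr_eq0 => [/allP /(_ k (mem_index_enum k)) /implyP /(_ isT) /eqP //|j _]; exact: sqr_ge0.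
    by rewrite vz !u_user0 !u_item0.
  - have S2z : S2 = 0.
      by move/eqP: s2; rewrite sqrtr_eq0 => h; apply/le_anti; rewrite h S20.
    have mz : muhat = muU.
      apply/funext => i; apply/funext => j.
      have hi : \sum_(j < nI) (muhat i j - muU i j) ^+ 2 = 0.
        apply: (psumr_eq0P _ S2z) => // k _; apply: sumr_ge0 => j' _; exact: sqr_ge0.
      have hij : (muhat i j - muU i j) ^+ 2 = 0.
        by apply: (psumr_eq0P _ hi) => // k _; exact: sqr_ge0.
      by apply/eqP; rewrite -subr_eq0 -sqrf_eq0 hij.
    by rewrite mz in H1.
have [Binf|Bfin] := eqVneq B +oo%E.
  by rewrite Binf gt0_mulye ?lte_fin // leey.
have n0 : (0 < nU + nI)%N.
  rewrite lt0n; apply/negP => /eqP e; move: Kp.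
  by rewrite /K e mul0r sqrtr0 mulr0 mul0r ltxx.
have b0 : forall i, 0 <= u_user muU v Phat i by move=> i; apply: u_user_ge0.
have bh0 : forall i, 0 <= u_user muhat v Phat i by move=> i; apply: u_user_ge0.
have a0 : forall i, 0 <= u_user muU v Pstar i by move=> i; apply: u_user_ge0.
have ah0 : forall i, 0 <= u_user muhat v Pstar i by move=> i; apply: u_user_ge0.
have d0 : forall j, 0 <= u_item muI v Phat j by move=> j; apply: u_item_ge0.
have c0 : forall j, 0 <= u_item muI v Pstar j by move=> j; apply: u_item_ge0.
have gB1 : forall i, (psi' alpha (u_user muU v Phat i) <= B)%E.
  move=> i; apply: le_trans (emax_ge (fun i => psi' alpha (u_user muU v Phat i)) i) _.
  by rewrite /B !le_max lexx.
have gB2 : forall j, (psi' alpha (u_item muI v Phat j) <= B)%E.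
  move=> j; apply: le_trans (emax_ge (fun j => psi' alpha (u_item muI v Phat j)) j) _.
  by rewrite /B !le_max lexx !orbT.
have gB3 : forall i, (psi' alpha (u_user muhat v Pstar i) <= B)%E.
  move=> i; apply: le_trans (emax_ge (fun i => psi' alpha (u_user muhat v Pstar i)) i) _.
  by rewrite /B !le_max lexx !orbT.
have gB4 : forall j, (psi' alpha (u_item muI v Pstar j) <= B)%E.
  move=> j; apply: le_trans (emax_ge (fun j => psi' alpha (u_item muI v Pstar j)) j) _.
  by rewrite /B !le_max lexx !orbT.
have nfin : forall x, (psi' alpha x <= B)%E -> psi' alpha x != +oo%E.
  move=> x h; apply/eqP => e; move: h; rewrite e leye_eq => /eqP e'.
  by rewrite e' eqxx in Bfin.
have g1 : forall i, 0 < u_user muU v Phat i \/ alpha = 1.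
  by move=> i; apply: good_of => //; apply: nfin.
have g2 : forall j, 0 < u_item muI v Phat j \/ alpha = 1.
  by move=> j; apply: good_of => //; apply: nfin.
have g3 : forall i, 0 < u_user muhat v Pstar i \/ alpha = 1.
  by move=> i; apply: good_of => //; apply: nfin.
have g4 : forall j, 0 < u_item muI v Pstar j \/ alpha = 1.
  by move=> j; apply: good_of => //; apply: nfin.
have B0 : (0 <= B)%E.
  move: n0; case: (posnP nU) => [->|nU0] /= n0.
    apply: le_trans (gB2 (Ordinal n0)); exact: psi'_ge0.
  apply: le_trans (gB1 (Ordinal nU0)); exact: psi'_ge0.
have Bf : B \is a fin_num.
  rewrite fin_numE Bfin andbT; apply/eqP => e; move: B0; by rewrite e.
set Br := fine B.
have BE : B = Br%:E by rewrite fineK.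
have Br0 : 0 <= Br by rewrite -lee_fin -BE.
have gr1 : forall i, gr alpha (u_user muU v Phat i) <= Br.
  by move=> i; have := gB1 i; rewrite psi'_fin // BE lee_fin.
have gr3 : forall i, gr alpha (u_user muhat v Pstar i) <= Br.
  by move=> i; have := gB3 i; rewrite psi'_fin // BE lee_fin.
have Wbd := W_fin a1 b0 d0 g1 g2.
have Wahc := W_fin a1 ah0 c0 g3 g4.
have Wbhd : (W (1/2) alpha alpha (u_user muhat v Phat) (u_item muI v Phat) <=
  ((1/2) * (\sum_i (fr alpha (u_user muU v Phat i) + gr alpha (u_user muU v Phat i) *
       (u_user muhat v Phat i - u_user muU v Phat i)) + \sum_j fr alpha (u_item muI v Phat j)))%:E)%E.
  apply: W_le => [i|j]; first exact: psi_conc.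
  by rewrite psi_fin.
have Wac : (W (1/2) alpha alpha (u_user muU v Pstar) (u_item muI v Pstar) <=
  ((1/2) * (\sum_i (fr alpha (u_user muhat v Pstar i) + gr alpha (u_user muhat v Pstar i) *
       (u_user muU v Pstar i - u_user muhat v Pstar i)) + \sum_j fr alpha (u_item muI v Pstar j)))%:E)%E.
  apply: W_le => [i|j]; first exact: psi_conc.
  by rewrite psi_fin.
rewrite Wahc in H1; have H1' := le_trans H1 Wbhd; rewrite lee_fin in H1'.
rewrite Wbd BE -EFinM; apply: le_trans (leeB Wac (lexx _)) _; rewrite -EFinB lee_fin.
have D1 := dev v0 muU muhat hPs.
have D2 := dev v0 muU muhat hPh.
set L := Num.sqrt (nU%:R * S1) * Num.sqrt S2 in D1 D2.
have T1 : \sum_i gr alpha (u_user muhat v Pstar i) * (u_user muU v Pstar i - u_user muhat v Pstar i)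
    <= Br * \sum_i `|u_user muU v Pstar i - u_user muhat v Pstar i|.
  rewrite mulr_sumr; apply: ler_sum => i _.
  apply: le_trans (ler_wpM2l (gr_ge0 _ (ah0 i)) (ler_norm _)) _.
  by apply: ler_wpM2r => //; exact: gr3.
have T2 : \sum_i gr alpha (u_user muU v Phat i) * (u_user muhat v Phat i - u_user muU v Phat i)
    <= Br * \sum_i `|u_user muU v Phat i - u_user muhat v Phat i|.
  rewrite mulr_sumr; apply: ler_sum => i _; rewrite distrC.
  apply: le_trans (ler_wpM2l (gr_ge0 _ (b0 i)) (ler_norm _)) _.
  by apply: ler_wpM2r => //; exact: gr1.
have LK : L <= K.
  rewrite /L /K; apply: ler_wpM2r; first exact: sqrtr_ge0.
  have h : Num.sqrt (nU%:R * S1) <= Num.sqrt ((nU + nI)%:R * S1).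
    rewrite ler_sqrt; last by rewrite mulr_ge0.
    by apply: ler_wpM2r => //; rewrite ler_nat leq_addr.
  have := sqrtr_ge0 ((nU + nI)%:R * S1); lra.
have T3 := ler_wpM2l Br0 D1.
have T4 := ler_wpM2l Br0 D2.
have T5 := ler_wpM2l Br0 LK.
rewrite !big_split /= in H1' *.
lra.
Qed.
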